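(* Let $h\colon\{0,1\}^k\to\{0,1\}$ be a partial function, and let $\mathcal D_0,\mathcal D_1,\mathcal D_2$ be probability distributions over $h^{-1}(0)$, $h^{-1}(1)$, and $h^{-1}(0)\cup h^{-1}(1)$ respectively. Then for every $0<\varepsilon\le 1/10$ there exists a conjunction $C\colon\{0,1\}^k\to\{0,1\}$ of width $\mathsf{WAPP}_\varepsilon(h)$ such that $C(\mathcal D_0)\le\delta\cdot C(\mathcal D_1)$, $C(\mathcal D_2)\le(1+\delta)\cdot C(\mathcal D_1)$, and $C(\mathcal D_1)>0$, where $\delta=2\sqrt{\varepsilon}$.
   Context: A conjunction is an AND of literals; its width is its number of literals. For a conjunction $C$ and distribution $\mathcal D$, $C(\mathcal D)=\Pr_{x\sim\mathcal D}[C(x)=1]$. A randomized decision tree is a probability distribution over deterministic decision trees; its cost is the maximum depth of a tree in its support. $\mathsf{WAPP}_\varepsilon(h)$ is the minimum cost of a randomized decision tree with outputs in $\{0,1\}$ such that for some $t>0$, on every $x$ with $h(x)=1$ the probability of outputting $1$ lies in $[(1-\varepsilon)t,t]$, and on every $x$ with $h(x)=0$ it lies in $[0,\varepsilon t]$. *)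

(* Defs.v *)
From HB Require Import structures.
From mathcomp Require Import all_boot all_order all_algebra.
From mathcomp Require Import reals.
Set Implicit Arguments. Unset Strict Implicit. Unset Printing Implicit Defensive.
Import Order.TTheory GRing.Theory Num.Theory.
Local Open Scope ring_scope.

Definition input (k : nat) := {ffun 'I_k -> bool}.

Inductive dtree (k : nat) : Type :=
| Leaf of bool
| Node of 'I_k & dtree k & dtree k.

Fixpoint dt_eval k (t : dtree k) (x : input k) : bool :=
  match t with
  | Leaf b => b
  | Node i t0 t1 => if x i then dt_eval t1 x else dt_eval t0 x
  end.

Fixpoint dt_depth k (t : dtree k) : nat :=
  match t with
  | Leaf _ => 0
  | Node _ t0 t1 => (maxn (dt_depth t0) (dt_depth t1)).+1
  end.

(* A randomized decision tree: a finitely supported probability distribution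
   over deterministic trees, given as a list of (weight, tree) pairs. *)
Definition rdtree (R : realType) (k : nat) := seq (R * dtree k).

Definition rdt_wf (R : realType) k (T : rdtree R k) : Prop :=
  all (fun p => 0 <= p.1) T /\ \sum_(p <- T) p.1 = 1.

Definition rdt_cost (R : realType) k (T : rdtree R k) : nat :=
  \max_(p <- T | p.1 != 0) dt_depth p.2.

Definition rdt_prob1 (R : realType) k (T : rdtree R k) (x : input k) : R :=
  \sum_(p <- T) p.1 * (dt_eval p.2 x)%:R.

(* Partial functions h : {0,1}^k -> {0,1}: None = undefined. *)
Definition pfun k := input k -> option bool.

Definition wapp_alg (R : realType) k (eps : R) (h : pfun k) (T : rdtree R k) : Prop :=
  rdt_wf T /\
  exists t : R, 0 < t /\
    (forall x, h x = Some true -> (1 - eps) * t <= rdt_prob1 T x <= t) /\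
    (forall x, h x = Some false -> 0 <= rdt_prob1 T x <= eps * t).

Definition is_WAPP (R : realType) k (eps : R) (h : pfun k) (d : nat) : Prop :=
  (exists T : rdtree R k, wapp_alg eps h T /\ rdt_cost T = d) /\
  (forall T : rdtree R k, wapp_alg eps h T -> (d <= rdt_cost T)%N).

Definition distr_on (R : realType) k (D : input k -> R) (S : input k -> bool) : Prop :=
  (forall x, 0 <= D x) /\ \sum_x D x = 1 /\ (forall x, D x != 0 -> S x).

(* Conjunctions: a set of literals (i, b) meaning "x_i = b"; width = #literals *)
Definition conj_eval k (C : {set 'I_k * bool}) (x : input k) : bool :=
  [forall l in C, x l.1 == l.2].

Definition conj_width k (C : {set 'I_k * bool}) : nat := #|C|.

Definition conj_prob (R : realType) k (C : {set 'I_k * bool}) (D : input k -> R) : R :=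
  \sum_(x | conj_eval C x) D x.

(* Main.v *)
Require Import Defs.
From HB Require Import structures.
From mathcomp Require Import all_boot all_order all_algebra.
From mathcomp Require Import reals.
From mathcomp Require Import ring lra.
Import Order.TTheory GRing.Theory Num.Theory.
Local Open Scope ring_scope.

Fixpoint paths {k} (t : dtree k) : seq {set 'I_k * bool} :=
  match t with
  | Leaf b => if b then [:: set0] else [::]
  | Node i t0 t1 => map (fun C => (i,false) |: C) (paths t0)
                    ++ map (fun C => (i,true) |: C) (paths t1)
  end.

Lemma conj_eval_U1 k (l : 'I_k * bool) C x :
  conj_eval (l |: C) x = (x l.1 == l.2) && conj_eval C x.
Proof.
rewrite /conj_eval; apply/forallP/andP => [H|[H1 H2] l'].
  split; first by have := H l; rewrite setU11.
  apply/forallP=> l'; apply/implyP=> Hl'; have := H l'; rewrite in_setU1 Hl' orbT //.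
apply/implyP; case/setU1P => [->|Hin] //; exact: (implyP (forallP H2 l') Hin).
Qed.

Lemma paths_eval (R : realType) k (t : dtree k) x :
  (dt_eval t x)%:R = \sum_(C <- paths t) (conj_eval C x)%:R :> R.
Proof.
elim: t => [[]|i t0 IH0 t1 IH1] /=.
- rewrite big_seq1; have -> : conj_eval (k:=k) set0 x = true by apply/forallP => l; rewrite in_set0.
  by []. - by rewrite unlock.
case Hxi: (x i); rewrite big_cat !big_map /=.
  rewrite big1 ?add0r; last by move=> C _; rewrite conj_eval_U1 Hxi.
  by rewrite IH1; apply: eq_bigr => C _; rewrite conj_eval_U1 Hxi.
rewrite [X in _ + X]big1 ?addr0; last by move=> C _; rewrite conj_eval_U1 Hxi.
by rewrite IH0; apply: eq_bigr => C _; rewrite conj_eval_U1 Hxi.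
Qed.

Lemma paths_width k (t : dtree k) :
  all (fun C : {set 'I_k * bool} => #|C| <= dt_depth t)%N (paths t).
Proof.
elim: t => [[]|i t0 IH0 t1 IH1] /=.
- by rewrite cards0.
- by [].
rewrite all_cat !all_map; apply/andP; split.
  apply/allP => C HC /=; rewrite cardsU1; have := allP IH0 C HC.
  case: (_ \notin _) => /= H; rewrite ?add0n ?add1n ?ltnS;
    apply: (leq_trans H); rewrite ?leq_max ?leqnn //; apply: leqW; by rewrite leq_maxl.
apply/allP => C HC /=; rewrite cardsU1; have := allP IH1 C HC.
case: (_ \notin _) => /= H; rewrite ?add0n ?add1n ?ltnS;
  apply: (leq_trans H); rewrite ?leq_max ?leqnn ?orbT //; apply: leqW; by rewrite leq_maxr.
Qed.

Lemma conj_probE (R : realType) k C (D : input k -> R) :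
  conj_prob C D = \sum_x D x * (conj_eval C x)%:R.
Proof.
rewrite /conj_prob big_mkcond; apply: eq_bigr => x _; case: conj_eval => /=.
  by rewrite mulr1. by rewrite mulr0.
Qed.

Lemma lin3 (R : realType) k (A B Cc f : input k -> R) a b c :
  \sum_x (a * A x + b * B x - c * Cc x) * f x =
  a * \sum_x A x * f x + b * \sum_x B x * f x - c * \sum_x Cc x * f x.
Proof.
rewrite !big_distrr -!sumrN -!big_split /=; apply: eq_bigr => x _; ring.
Qed.

Lemma acc_decomp (R : realType) k (T : rdtree R k) (D : input k -> R) :
  \sum_x D x * rdt_prob1 T x =
  \sum_(p <- T) p.1 * \sum_(C <- paths p.2) \sum_x D x * (conj_eval C x)%:R.
Proof.
rewrite /rdt_prob1.
under eq_bigr do rewrite big_distrr.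
rewrite exchange_big /=; apply: eq_bigr => p _.
under eq_bigr do rewrite paths_eval mulrCA.
rewrite -big_distrr /=; congr (_ * _).
under eq_bigr do rewrite big_distrr.
by rewrite exchange_big.
Qed.

Lemma seq_ge0 (R : realType) k (T : rdtree R k) (F : dtree k -> R) (d : nat) :
  all (fun p => 0 <= p.1) T ->
  (\max_(p <- T | p.1 != 0%R) dt_depth p.2 <= d)%N ->
  (forall t, (dt_depth t <= d)%N -> 0 <= F t) ->
  0 <= \sum_(p <- T) p.1 * F p.2.
Proof.
move=> + + HF; elim: T => [|p T IH] /=; first by move=> _ _; rewrite unlock.
case/andP=> p0 wf; rewrite !big_cons.
have [->|pn] := eqVneq p.1 0.
  by rewrite mul0r add0r; apply: IH.
rewrite geq_max => /andP[dp dT].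
by apply: addr_ge0; [apply: mulr_ge0 => //; apply: HF | apply: IH].
Qed.

Theorem fact3p1 (R : realType) (k : nat) (h : pfun k)
  (D0 D1 D2 : input k -> R)
  (hD0 : distr_on D0 (fun x => h x == Some false))
  (hD1 : distr_on D1 (fun x => h x == Some true))
  (hD2 : distr_on D2 (fun x => h x != None))
  (eps : R) (heps0 : 0 < eps) (heps1 : eps <= 1 / 10)
  (d : nat) (hd : is_WAPP eps h d) :
  let delta := 2 * Num.sqrt eps in
  exists C : {set 'I_k * bool},
    (conj_width C <= d)%N /\
    conj_prob C D0 <= delta * conj_prob C D1 /\
    conj_prob C D2 <= (1 + delta) * conj_prob C D1 /\
    0 < conj_prob C D1.
Proof.
move=> delta.
case: hD0 => [D0ge [D0s D0S]]; case: hD1 => [D1ge [D1s D1S]]; case: hD2 => [D2ge [D2s D2S]].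
case: hd => [[T [[[wfa wfs] [t [tpos [H1 H0]]]] cost]] _].
have s0 : 0 < Num.sqrt eps by rewrite sqrtr_gt0.
have s2 : Num.sqrt eps ^+ 2 = eps by rewrite sqr_sqrtr // ltW.
have d0 : 0 <= delta by rewrite /delta mulr_ge0 // ltW.
case: (boolP [exists C : {set 'I_k * bool}, [&& (#|C| <= d)%N,
   conj_prob C D0 <= delta * conj_prob C D1,
   conj_prob C D2 <= (1+delta) * conj_prob C D1 & 0 < conj_prob C D1]]).
  by case/existsP => C /and4P [a b c e]; exists C.
rewrite negb_exists => /forallP Hbad; exfalso.
have E0 : \sum_x D0 x * rdt_prob1 T x <= eps * t.
  rewrite -[eps * t]mul1r -D0s big_distrl /=; apply: ler_sum => x _.
  have [->|Hx] := eqVneq (D0 x) 0; first by rewrite !mul0r.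
  move: (D0S x Hx) => /= /eqP hx; have /andP[_ ub] := H0 x hx.
  by apply: ler_wpM2l.
have E1 : (1 - eps) * t <= \sum_x D1 x * rdt_prob1 T x.
  set c := (1 - eps) * t; rewrite -[c]mul1r -D1s big_distrl /=; apply: ler_sum => x _.
  have [->|Hx] := eqVneq (D1 x) 0; first by rewrite !mul0r.
  move: (D1S x Hx) => /= /eqP hx; have /andP[lb _] := H1 x hx.
  by apply: ler_wpM2l.
have E2 : \sum_x D2 x * rdt_prob1 T x <= t.
  rewrite -[t]mul1r -D2s big_distrl /=; apply: ler_sum => x _.
  have [->|Hx] := eqVneq (D2 x) 0; first by rewrite !mul0r.
  apply: ler_wpM2l => //.
  move: (D2S x Hx) => /=; case E: (h x) => [[]|] // _.
    by have /andP[_ ub] := H1 x E.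
  have /andP[_ ub] := H0 x E; apply: (le_trans ub).
  nra.
have key := @acc_decomp R k T (fun x => (1 + delta) * D0 x + delta * D2 x - (delta * (1 + delta)) * D1 x).
rewrite /= lin3 in key.
have Rge : 0 <= \sum_(p <- T) p.1 * \sum_(C <- paths p.2)
    \sum_x ((1 + delta) * D0 x + delta * D2 x - (delta * (1 + delta)) * D1 x) *
    (conj_eval C x)%:R.
  apply: (@seq_ge0 R k T (fun tr => \sum_(C <- paths tr) \sum_x ((1 + delta) * D0 x + delta * D2 x - (delta * (1 + delta)) * D1 x) * (conj_eval C x)%:R) d wfa); first by rewrite -cost.
  move=> tr dp.
  rewrite big_seq; apply: sumr_ge0 => C CP.
  rewrite lin3 -!conj_probE.
  have w : (#|C| <= d)%N by apply: leq_trans dp; exact: (allP (@paths_width k tr) C CP).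
  have := Hbad C; rewrite w /= !negb_and -!ltNge -leNgt.
  have P0 : 0 <= conj_prob C D0 by apply: sumr_ge0.
  have P1 : 0 <= conj_prob C D1 by apply: sumr_ge0.
  have P2 : 0 <= conj_prob C D2 by apply: sumr_ge0.
  case/or3P => HH.
  - nra.
  - nra.
  - have -> : conj_prob C D1 = 0 by apply/le_anti; rewrite HH P1.
    nra.
rewrite -key in Rge.
set e0 := \sum_x D0 x * _ in Rge E0.
set e1 := \sum_x D1 x * _ in Rge E1.
set e2 := \sum_x D2 x * _ in Rge E2.
clear Hbad key.
have hdl : delta = 2 * Num.sqrt eps by [].
clearbody delta.
move: s0 s2 hdl; set s := Num.sqrt eps => s0 s2 hdl.
have hs : s < 1/2 by nra.
have h0 : 0 <= (1 + delta) * (eps * t - e0) by apply: mulr_ge0; lra.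
have h1 : 0 <= delta * (t - e2) by apply: mulr_ge0; lra.
have h2 : 0 <= delta * (1 + delta) * (e1 - (1 - eps) * t) by apply: mulr_ge0; [apply: mulr_ge0|]; lra.
have h3 : 0 < t * s^+2 * (3 - 4 * s - 4 * s^+2) by apply: mulr_gt0; [apply: mulr_gt0|]; nra.
rewrite hdl -s2 in Rge h0 h1 h2.
nra.
Qed.
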